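(* Let $n\in\mathbb{N}$ and $0<\beta\le n$. Then there exists a constant $C_\beta>0$ depending only on $\beta$ such that for all functions $f,g$ on $\mathbb{R}^n$: (i) $\|f+g\|_{\operatorname{BMO}^\beta(\mathbb{R}^n)}\le2(\|f\|_{\operatorname{BMO}^\beta(\mathbb{R}^n)}+\|g\|_{\operatorname{BMO}^\beta(\mathbb{R}^n)})$; (ii) $\|\lambda f\|_{\operatorname{BMO}^\beta(\mathbb{R}^n)}=|\lambda|\|f\|_{\operatorname{BMO}^\beta(\mathbb{R}^n)}$ for every $\lambda\in\mathbb{R}$; (iii) $\||f|\|_{\operatorname{BMO}^\beta(\mathbb{R}^n)}\le C_\beta\|f\|_{\operatorname{BMO}^\beta(\mathbb{R}^n)}$; (iv) $\|\max(f,g)\|_{\operatorname{BMO}^\beta(\mathbb{R}^n)}\le C_\beta(\|f\|_{\operatorname{BMO}^\beta(\mathbb{R}^n)}+\|g\|_{\operatorname{BMO}^\beta(\mathbb{R}^n)})$; (v) $\|\min(f,g)\|_{\operatorname{BMO}^\beta(\mathbb{R}^n)}\le C_\beta(\|f\|_{\operatorname{BMO}^\beta(\mathbb{R}^n)}+\|g\|_{\operatorname{BMO}^\beta(\mathbb{R}^n)})$.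
   Context: $\mathcal{H}^\beta_\infty(E)=\inf\{\sum_i\omega_\beta r_i^\beta:E\subset\bigcup_iB(x_i,r_i)\}$, $\omega_\beta=\pi^{\beta/2}/\Gamma(\beta/2+1)$; integrals against $\mathcal{H}^\beta_\infty$ are Choquet integrals $\int_\Omega h\,d\mathcal{H}^\beta_\infty=\int_0^\infty\mathcal{H}^\beta_\infty(\{x\in\Omega:h>t\})\,dt$. Cubes are axis-parallel with side length $\ell(Q)$. $\|f\|_{\operatorname{BMO}^\beta(\mathbb{R}^n)}=\sup_Q\inf_{c\in\mathbb{R}}\ell(Q)^{-\beta}\int_Q|f-c|\,d\mathcal{H}^\beta_\infty$. *)

(* Defs.v *)
From HB Require Import structures.
From mathcomp Require Import all_boot all_order all_algebra.
From mathcomp Require Import all_classical all_reals all_analysis.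
Set Implicit Arguments. Unset Strict Implicit. Unset Printing Implicit Defensive.
Import Order.TTheory GRing.Theory Num.Theory.
Local Open Scope classical_set_scope.
Local Open Scope ring_scope.

Section BMOdefs.
Variable R : realType.

Definition Gammaf (s : R) : R :=
  fine (\int[@lebesgue_measure R]_(t in `]0%R, +oo[%classic)
          (powR t (s - 1) * expR (- t))%:E)%E.

Definition omega (beta : R) : R :=
  powR pi (beta / 2) / Gammaf (beta / 2 + 1).

Definition edist (n : nat) (x y : 'rV[R]_n) : R :=
  Num.sqrt (\sum_(i < n) (x ord0 i - y ord0 i) ^+ 2).

Definition eball (n : nat) (x : 'rV[R]_n) (r : R) : set 'rV[R]_n :=
  [set y | edist x y <= r].

Definition hcontent (n : nat) (beta : R) (E : set 'rV[R]_n) : \bar R :=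
  ereal_inf [set (\sum_(0 <= i <oo) (omega beta * powR (r i) beta)%:E)%E
            | r in [set r : nat -> R | (forall i, 0 <= r i) /\
                exists x : nat -> 'rV[R]_n,
                  E `<=` \bigcup_i eball (x i) (r i)]].

Definition choquet (n : nat) (beta : R) (Omega : set 'rV[R]_n)
    (h : 'rV[R]_n -> R) : \bar R :=
  (\int[@lebesgue_measure R]_(t in `[0%R, +oo[%classic)
     hcontent beta [set x | Omega x /\ (t < h x)%R])%E.

Definition cube (n : nat) (a : 'rV[R]_n) (l : R) : set 'rV[R]_n :=
  [set x | forall i : 'I_n, a ord0 i <= x ord0 i <= a ord0 i + l].

Definition bmo_norm (n : nat) (beta : R) (f : 'rV[R]_n -> R) : \bar R :=
  ereal_sup [set ereal_inf [set ((powR al.2 (- beta))%:E *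
                    choquet beta (cube al.1 al.2) (fun x => `|f x - c|%R))%E
                            | c in [set: R]]
            | al in [set al : 'rV[R]_n * R | 0 < al.2]].
End BMOdefs.

(* Main.v *)
Require Import Defs.
From HB Require Import structures.
From mathcomp Require Import all_boot all_order all_algebra.
From mathcomp Require Import all_classical all_reals all_analysis.
From mathcomp Require Import measurable_realfun.
From mathcomp Require Import lra.
Import Order.TTheory GRing.Theory Num.Theory.
Local Open Scope ring_scope.
Section All.
Local Open Scope classical_set_scope.

Section H.
Context {R : realType}.
Local Open Scope ereal_scope.

Lemma omega_ge0 (beta : R) : (0 <= omega beta)%R.
Proof.
rewrite /omega; apply: divr_ge0; first exact: powR_ge0.
rewrite /Gammaf; apply: fine_ge0; apply: integral_ge0 => t _.
by rewrite lee_fin; apply: mulr_ge0; [exact: powR_ge0|exact: expR_ge0].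
Qed.

Lemma inf_sum (S T : set (\bar R)) (x : \bar R) :
  (forall a, S a -> 0 <= a) -> (forall b, T b -> 0 <= b) ->
  (forall a b, S a -> T b -> x <= a + b) -> x <= ereal_inf S + ereal_inf T.
Proof.
move=> S0 T0 H.
have iS0 : 0 <= ereal_inf S by apply: le_ereal_inf_tmp.
have iT0 : 0 <= ereal_inf T by apply: le_ereal_inf_tmp.
have [Sy|] := eqVneq (ereal_inf S) +oo.
  by rewrite Sy addye ?leey // gt_eqF // (lt_le_trans _ iT0) // ltNy0.
have [Ty|] := eqVneq (ereal_inf T) +oo.
  by rewrite Ty addey ?leey // gt_eqF // (lt_le_trans _ iS0) // ltNy0.
move=> Tn Sn.
have Sf : ereal_inf S \is a fin_num by rewrite ge0_fin_numE // ltey.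
have Tf : ereal_inf T \is a fin_num by rewrite ge0_fin_numE // ltey.
apply/lee_addgt0Pr => e e0.
have e20 : (0 < e / 2)%R by rewrite divr_gt0.
have [a Sa ha] := lb_ereal_inf_adherent e20 Sf.
have [b Tb hb] := lb_ereal_inf_adherent e20 Tf.
apply: (le_trans (H _ _ Sa Tb)).
have -> : e%:E = (e / 2)%:E + (e / 2)%:E by rewrite -EFinD -splitr.
rewrite addeACA.
by apply: leeD; apply: ltW; rewrite ?(addeAC) //.
Qed.


Lemma interleave_sum (a b : nat -> \bar R) N :
  \sum_(0 <= k < N.*2) (if odd k then b k./2 else a k./2) =
  \sum_(0 <= i < N) a i + \sum_(0 <= i < N) b i.
Proof.
elim: N => [|N IH]; first by rewrite !big_geq // adde0.
rewrite doubleS !big_nat_recr //= IH odd_double /= uphalf_double doubleK.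
first [by rewrite addrACA | by rewrite -!addrA; congr (_ + _); rewrite addrCA] .
Qed.

Variables (n : nat) (beta : R).
Notation H := (@hcontent R n beta).

Lemma hc_ge0 A : 0 <= H A.
Proof.
apply: le_ereal_inf_tmp => _ [r [r0 _] <-].
apply: nneseries_ge0 => i _ _; rewrite lee_fin.
by apply: mulr_ge0; [exact: omega_ge0|exact: powR_ge0].
Qed.

Lemma hc_mono A B : A `<=` B -> H A <= H B.
Proof.
move=> AB; apply: ereal_inf_le_tmp => _ [r [r0 [x cov]] <-].
by exists r => //; split => //; exists x; exact: subset_trans AB cov.
Qed.

Lemma hc_U A B : H (A `|` B) <= H A + H B.
Proof.
apply: inf_sum.
- by move=> _ [r [r0 _] <-]; apply: nneseries_ge0 => i _ _; rewrite lee_fin;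
    apply: mulr_ge0; [exact: omega_ge0|exact: powR_ge0].
- by move=> _ [r [r0 _] <-]; apply: nneseries_ge0 => i _ _; rewrite lee_fin;
    apply: mulr_ge0; [exact: omega_ge0|exact: powR_ge0].
move=> _ _ [r1 [r10 [x1 c1]] <-] [r2 [r20 [x2 c2]] <-].
pose r k := if odd k then r2 k./2 else r1 k./2.
pose x k := if odd k then x2 k./2 else x1 k./2.
have r0 k : (0 <= r k)%R by rewrite /r; case: ifP.
apply: (@le_trans _ _ (\sum_(0 <= i <oo) (omega beta * powR (r i) beta)%:E)).
  apply: ge_ereal_inf; exists (\sum_(0 <= i <oo) (omega beta * powR (r i) beta)%:E) => //.
  exists r => //; split => //; exists x => y [/c1|/c2] [i _ hi].
    by exists i.*2 => //; rewrite /r /x odd_double doubleK.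
  by exists i.*2.+1 => //; rewrite /r /x /= odd_double /= uphalf_double.
set u := fun k => (omega beta * powR (r k) beta)%:E.
have u0 k : 0 <= u k by rewrite lee_fin; apply: mulr_ge0; [exact: omega_ge0|exact: powR_ge0].
apply: lime_le; first by apply: is_cvg_nneseries => i _ _; exact: u0.
apply: nearW => m.
apply: (@le_trans _ _ (\sum_(0 <= k < m.*2) u k)).
  by rewrite -addnn; exact: (@lee_sum_nneg_natr _ u xpredT 0 (fun k _ _ => u0 k) m (m+m)%N (leq_addr m m)).
have -> : \sum_(0 <= k < m.*2) u k = \sum_(0 <= k < m.*2)
   (if odd k then (omega beta * powR (r2 k./2) beta)%:E
             else (omega beta * powR (r1 k./2) beta)%:E).
  by apply: eq_bigr => k _; rewrite /u /r; case: ifP.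
rewrite (interleave_sum (fun i => (omega beta * powR (r1 i) beta)%:E) (fun i => (omega beta * powR (r2 i) beta)%:E)); apply: leeD; apply: nneseries_lim_ge => i _ _;
  by rewrite lee_fin; apply: mulr_ge0; [exact: omega_ge0|exact: powR_ge0].
Qed.

End H.
Lemma preimage_scale_oc {R : realType} (a x y : R) : 0 < a ->
  (fun t => a * t) @^-1` `]x, y]%classic = `](x / a), (y / a)]%classic.
Proof.
move=> a0; apply/seteqP; split => t; rewrite /= !in_itv /=.
  by move=> /andP[h1 h2]; rewrite ltr_pdivrMr // ler_pdivlMr // ![t * a]mulrC h1 h2.
by move=> /andP[h1 h2]; rewrite mulrC -ltr_pdivrMr // -ler_pdivlMr // h1 h2.
Qed.

Lemma preimage_scale_cy {R : realType} (a : R) : 0 < a ->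
  (fun t => a * t) @^-1` `[0, +oo[%classic = `[0, +oo[%classic.
Proof.
move=> a0; apply/seteqP; split => t; rewrite /= !in_itv /= !andbT.
  by rewrite pmulr_rge0.
by move=> h; rewrite mulr_ge0 // ltW.
Qed.

Section S.
Context {R : realType}.
Local Open Scope ereal_scope.
Notation mu := (@lebesgue_measure R).

Lemma noninc_emeasurable (D : set R) (f : R -> \bar R) : measurable D ->
  (forall x y : R, (x <= y)%R -> f y <= f x) -> measurable_fun D f.
Proof.
move=> mD f_ni.
apply: (@measurability _ _ _ _ D f (@ErealGenCInfty.G R)) => [|/= _ [_] [r] -> <-].
  exact: ErealGenCInfty.measurableE.
apply: measurableI => //; apply: is_interval_measurable => s t/=.
rewrite !in_itv/= !andbT => fs ft u /andP[su ut].
by rewrite in_itv/= andbT (le_trans ft)// f_ni.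
Qed.

Lemma integral_scale (F : R -> \bar R) (a : R) : (0 < a)%R ->
  (forall t, 0 <= F t) -> (forall x y : R, (x <= y)%R -> F y <= F x) ->
  \int[mu]_(t in `[0%R, +oo[) F t =
  a%:E * \int[mu]_(t in `[0%R, +oo[) F (a * t)%R.
Proof.
move=> a0 F0 Fni.
pose psi := (fun t : R => (a * t)%R) : measurableTypeR R -> measurableTypeR R.
have mpsi : measurable_fun [set: measurableTypeR R] psi.
  by apply: measurable_funM => //; exact: measurable_cst.
have a0' : (0 <= a)%R by exact: ltW.
pose pm := measure_function_pushforward__canonical__measure_function_Measure mu mpsi.
pose mu' := measure_function_mscale__canonical__measure_function_Measure (NngNum a0') pm.
have eqm : forall A, measurable A -> mu A = mu' A.
  move=> A mA; apply: (@lebesgue_measure_unique R mu') => // _ [[x y] _ <-].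
  transitivity (a%:E * mu (psi @^-1` `]x, y]%classic)); last by [].
  rewrite /psi preimage_scale_oc //.
  rewrite !lebesgue_measure_itv /= !lte_fin ltr_pM2r ?invr_gt0 //.
  case: ifP => _; last by rewrite mule0.
  by rewrite -EFinD -EFinM; congr EFin; rewrite -mulrBl mulrCA divff ?gt_eqF // mulr1.
rewrite (@eq_measure_integral _ _ _ _ mu') ; last by move=> A mA _; exact: eqm.
have mF : measurable_fun (`[0%R, +oo[%classic : set R) F by exact: noninc_emeasurable.
rewrite ge0_integral_mscale //; try by move=> t _; exact: F0.
rewrite (@ge0_integral_pushforward _ _ _ _ R psi mpsi mu) //; try by move=> t _; exact: F0.
congr (_ * _).
by rewrite /psi preimage_scale_cy.
Qed.

End S.

Section C.
Context {R : realType}.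
Local Open Scope ereal_scope.
Variables (n : nat) (beta : R).
Notation H := (@hcontent R n beta).
Notation mu := (@lebesgue_measure R).
Implicit Types (O : set 'rV[R]_n) (h : 'rV[R]_n -> R).

Definition lvl (O : set 'rV[R]_n) (h : 'rV[R]_n -> R) (t : R) :=
  H [set x | O x /\ (t < h x)%R].

Lemma lvl_ni O h (s t : R) : (s <= t)%R -> lvl O h t <= lvl O h s.
Proof. by move=> st; apply: hc_mono => x [Ox tx]; split => //; exact: le_lt_trans tx. Qed.

Lemma lvl_ge0 O h t : 0 <= lvl O h t.
Proof. exact: hc_ge0. Qed.

Lemma lvl_m O h : measurable_fun (`[0%R, +oo[%classic : set R) (lvl O h).
Proof. by apply: noninc_emeasurable => // s t; exact: lvl_ni. Qed.

Lemma choquetE O h : choquet beta O h = \int[mu]_(t in `[0%R, +oo[) lvl O h t.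
Proof. by []. Qed.

Lemma choquet_ge0 O h : 0 <= choquet beta O h.
Proof. by rewrite choquetE; apply: integral_ge0 => t _; exact: lvl_ge0. Qed.

Lemma choquet_le O h1 h2 : (forall x, O x -> (h1 x <= h2 x)%R) ->
  choquet beta O h1 <= choquet beta O h2.
Proof.
move=> h12; rewrite !choquetE; apply: ge0_le_integral => //.
- by move=> t _; exact: lvl_ge0.
- exact: lvl_m.
- exact: lvl_m.
by move=> t _; apply: hc_mono => x [Ox tx]; split => //; exact: lt_le_trans (h12 _ Ox).
Qed.

Lemma choquetZ O h k : (0 < k)%R ->
  choquet beta O (fun x => k * h x)%R = k%:E * choquet beta O h.
Proof.
move=> k0; rewrite !choquetE.
have -> : \int[mu]_(t in `[0%R, +oo[) lvl O (fun x => k * h x)%R t =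
          \int[mu]_(t in `[0%R, +oo[) lvl O h (t / k)%R.
  apply: eq_integral => t _; rewrite /lvl; congr H; apply/seteqP; split => x [Ox tx];
    split => //.
    by rewrite -(ltr_pM2r k0) divfK ?gt_eqF // mulrC.
  by rewrite mulrC -(divfK (lt0r_neq0 k0) t) ltr_pM2r.
rewrite (@integral_scale _ (fun t => lvl O h (t / k)%R) k) //.
- congr (_ * _); apply: eq_integral => t _.
  by rewrite /= [(k * t / k)%R]mulrC mulrA mulVf ?mul1r // lt0r_neq0.
- by move=> t; exact: lvl_ge0.
- move=> s t st; apply: lvl_ni; rewrite ler_pM2r // invr_gt0 //.
Qed.

Lemma choquet_sub O h h1 h2 :
  (forall x, O x -> (h x <= h1 x + h2 x)%R) ->
  choquet beta O h <= 2%:E * (choquet beta O h1 + choquet beta O h2).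
Proof.
move=> hh.
rewrite ge0_muleDr ?choquet_ge0 // -!choquetZ //.
rewrite !choquetE -ge0_integralD //; last 4 first.
- by move=> t _; exact: lvl_ge0.
- exact: lvl_m.
- by move=> t _; exact: lvl_ge0.
- exact: lvl_m.
apply: ge0_le_integral => //.
- by move=> t _; exact: lvl_ge0.
- exact: lvl_m.
- by apply: emeasurable_funD; exact: lvl_m.
move=> t _; rewrite /lvl; apply: le_trans (hc_U _ _ _ _); apply: hc_mono.
move=> x [Ox tx] /=.
have [h1t|h1t] := ltP t (2 * h1 x)%R; first by left.
have [h2t|h2t] := ltP t (2 * h2 x)%R; first by right.
have := hh _ Ox; lra.
Qed.

End C.

Lemma max_dist {R : realType} (a b c d : R) :
  `|Num.max a b - Num.max c d| <= `|a - c| + `|b - d|.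
Proof.
have h1 := ler_norm (a - c); have h2 := ler_norm (b - d).
have h3 : - (a - c) <= `|a - c| by rewrite -normrN ler_norm.
have h4 : - (b - d) <= `|b - d| by rewrite -normrN ler_norm.
rewrite !maxEle ler_norml; have [hab|hab] := leP a b; have [hcd|hcd] := leP c d; apply/andP; split; lra.
Qed.

Lemma min_dist {R : realType} (a b c d : R) :
  `|Num.min a b - Num.min c d| <= `|a - c| + `|b - d|.
Proof.
have h1 := ler_norm (a - c); have h2 := ler_norm (b - d).
have h3 : - (a - c) <= `|a - c| by rewrite -normrN ler_norm.
have h4 : - (b - d) <= `|b - d| by rewrite -normrN ler_norm.
rewrite !minEle ler_norml; have [hab|hab] := leP a b; have [hcd|hcd] := leP c d; apply/andP; split; lra.
Qed.

Lemma add_dist {R : realType} (a b c d : R) :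
  `|(a + b) - (c + d)| <= `|a - c| + `|b - d|.
Proof.
have -> : (a + b) - (c + d) = (a - c) + (b - d) by rewrite opprD addrACA.
exact: ler_normD.
Qed.

Section B.
Context {R : realType}.
Local Open Scope ereal_scope.
Variables (n : nat) (beta : R).
Hypothesis hb : (0 < beta)%R.
Notation H := (@hcontent R n beta).
Implicit Types (f g u : 'rV[R]_n -> R) (al : 'rV[R]_n * R).

Definition Phi f al c := (powR al.2 (- beta))%:E *
  choquet beta (cube al.1 al.2) (fun x => `|f x - c|%R).
Definition Inf f al := ereal_inf [set Phi f al c | c in [set: R]].

Lemma bmoE f : bmo_norm beta f = ereal_sup [set Inf f al | al in [set al | (0 < al.2)%R]].
Proof. by []. Qed.

Lemma Phi_ge0 f al c : 0 <= Phi f al c.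
Proof. by apply: mule_ge0; [rewrite lee_fin powR_ge0|exact: choquet_ge0]. Qed.

Lemma Inf_ge0 f al : 0 <= Inf f al.
Proof. by apply: le_ereal_inf_tmp => _ [c _ <-]; exact: Phi_ge0. Qed.

Lemma bmo_ge0 f : 0 <= bmo_norm beta f.
Proof.
rewrite bmoE; apply: (le_trans (Inf_ge0 f ((0%R : 'rV[R]_n), 1%R))).
by apply: ereal_sup_ubound; exists ((0%R : 'rV[R]_n), 1%R) => //=.
Qed.

Lemma bmo_le1 u f : (forall al c1, (0 < al.2)%R -> exists c,
    choquet beta (cube al.1 al.2) (fun x => `|u x - c|%R) <=
    choquet beta (cube al.1 al.2) (fun x => `|f x - c1|%R)) ->
  bmo_norm beta u <= bmo_norm beta f.
Proof.
move=> hyp; rewrite !bmoE; apply: ge_ereal_sup => _ [al al0 <-].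
apply: le_trans (ereal_sup_ubound _); last by exists al.
apply: le_ereal_inf_tmp => _ [c1 _ <-].
have [c hc] := hyp al c1 al0.
apply: ge_ereal_inf; exists (Phi u al c); first by exists c.
by apply: lee_wpmul2l => //; rewrite lee_fin powR_ge0.
Qed.

Lemma bmo_le2 u f g : (forall al c1 c2, (0 < al.2)%R -> exists c,
    choquet beta (cube al.1 al.2) (fun x => `|u x - c|%R) <=
    2%:E * (choquet beta (cube al.1 al.2) (fun x => `|f x - c1|%R) +
            choquet beta (cube al.1 al.2) (fun x => `|g x - c2|%R))) ->
  bmo_norm beta u <= 2%:E * (bmo_norm beta f + bmo_norm beta g).
Proof.
move=> hyp; rewrite [bmo_norm beta u]bmoE; apply: ge_ereal_sup => _ [al al0 <-].
apply: (@le_trans _ _ (2%:E * (Inf f al + Inf g al))); last first.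
  apply: lee_wpmul2l => //; apply: leeD; apply: ereal_sup_ubound; by exists al.
rewrite ge0_muleDr ?Inf_ge0 // -!ereal_inf_pZl //.
apply: inf_sum.
- by move=> _ [_ [c _ <-] <-]; apply: mule_ge0 => //; exact: Phi_ge0.
- by move=> _ [_ [c _ <-] <-]; apply: mule_ge0 => //; exact: Phi_ge0.
move=> _ _ [_ [c1 _ <-] <-] [_ [c2 _ <-] <-].
have [c hc] := hyp al c1 c2 al0.
apply: ge_ereal_inf; exists (Phi u al c); first by exists c.
rewrite /Phi muleCA [2%:E * (_ * choquet _ _ (fun x => `|g x - c2|%R))]muleCA.
rewrite -ge0_muleDr; [|by apply: mule_ge0 => //; exact: choquet_ge0
                     |by apply: mule_ge0 => //; exact: choquet_ge0].
rewrite -ge0_muleDr ?choquet_ge0 //.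
by apply: lee_wpmul2l => //; rewrite lee_fin powR_ge0.
Qed.

Lemma hc0 : H set0 = 0.
Proof.
apply/le_anti; rewrite hc_ge0 andbT; apply: ge_ereal_inf.
exists 0 => //; exists (fun _ => 0%R).
  by split => //; exists (fun _ => 0%R); exact: sub0set.
by apply: eseries0 => i _ _; rewrite powR0 ?gt_eqF // mulr0.
Qed.

Lemma choquet_zero (O : set 'rV[R]_n) h : (forall x, h x = 0%R) ->
  choquet beta O h = 0.
Proof.
move=> h0; rewrite choquetE; apply: integral0_eq => t.
rewrite /= in_itv /= andbT => t0.
rewrite /lvl -[X in _ = X]hc0; congr H; apply/seteqP; split => x //=.
by rewrite h0 => -[_]; rewrite ltNge t0.
Qed.

Lemma Phi_scale lam f al c : lam != 0%R ->
  Phi (fun x => lam * f x)%R al c = `|lam|%:E * Phi f al (c / lam).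
Proof.
move=> l0; rewrite /Phi muleCA; congr (_ * _).
rewrite -choquetZ ?normr_gt0 //; congr choquet; apply/funext => x.
by rewrite -normrM mulrBr mulrCA divff // mulr1.
Qed.

Lemma Inf_scale lam f al : lam != 0%R ->
  Inf (fun x => lam * f x)%R al = `|lam|%:E * Inf f al.
Proof.
move=> l0; unfold Inf; rewrite -ereal_inf_pZl ?normr_gt0 //; congr ereal_inf.
apply/seteqP; split => y.
  move=> [c _ <-]; exists (Phi f al (c / lam)%R); first by exists (c / lam)%R.
  by rewrite Phi_scale.
move=> [_ [c _ <-] <-]; exists (lam * c)%R => //.
by rewrite Phi_scale // [(lam * c / lam)%R]mulrC mulKf.
Qed.

Lemma bmo_scale lam f :
  bmo_norm beta (fun x => (lam * f x)%R) = (`|lam|%:E * bmo_norm beta f)%E.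
Proof.
have [->|l0] := eqVneq lam 0%R.
  rewrite normr0 mul0e; apply/le_anti; rewrite bmo_ge0 andbT bmoE.
  apply: ge_ereal_sup => _ [al al0 <-]; apply: ge_ereal_inf.
  exists (Phi (fun x => 0 * f x)%R al 0%R); first by exists 0%R.
  by rewrite /Phi choquet_zero ?mule0 // => x; rewrite mul0r subr0 normr0.
rewrite !bmoE -ereal_sup_pZl ?normr_gt0 //; congr ereal_sup.
apply/seteqP; split => y.
  move=> [al al0 <-]; exists (Inf f al); first by exists al.
  by rewrite Inf_scale.
move=> [_ [al al0 <-] <-]; exists al => //.
by rewrite Inf_scale.
Qed.

End B.

End All.

Theorem lemma2p10 (R : realType) (beta : R) (hbeta : 0 < beta) :
  exists C : R, 0 < C /\
  forall (n : nat), beta <= n%:R ->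
  forall f g : 'rV[R]_n -> R,
    [/\ (bmo_norm beta (fun x => (f x + g x)%R)
           <= 2%:E * (bmo_norm beta f + bmo_norm beta g))%E,
        (forall lam : R,
           bmo_norm beta (fun x => (lam * f x)%R) = (`|lam|%:E * bmo_norm beta f)%E),
        (bmo_norm beta (fun x => `|f x|%R) <= C%:E * bmo_norm beta f)%E,
        (bmo_norm beta (fun x => Num.max (f x) (g x))
           <= C%:E * (bmo_norm beta f + bmo_norm beta g))%E &
        (bmo_norm beta (fun x => Num.min (f x) (g x))
           <= C%:E * (bmo_norm beta f + bmo_norm beta g))%E].
Proof.
exists 2; split => // n _ f g; split.
- apply: bmo_le2 => al c1 c2 _; exists (c1 + c2).
  by apply: choquet_sub => x _; exact: add_dist.
- by move=> lam; exact: bmo_scale.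
- apply: (@le_trans _ _ (bmo_norm beta f)).
    apply: bmo_le1 => al c1 _; exists `|c1|.
    by apply: choquet_le => x _; exact: ler_dist_dist.
  by apply: lee_pemull; [exact: bmo_ge0|rewrite lee_fin; lra].
- apply: bmo_le2 => al c1 c2 _; exists (Num.max c1 c2).
  by apply: choquet_sub => x _; exact: max_dist.
- apply: bmo_le2 => al c1 c2 _; exists (Num.min c1 c2).
  by apply: choquet_sub => x _; exact: min_dist.
Qed.
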